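(* Let $G^1$ be a 1-wconnected 1-graph with infinitely many boundary 1-nodes such that ${}^{*}G^1$ has a hypernode not in its principal 1-galaxy $\Gamma_0^1$. Let $\Gamma_a^1,\Gamma_b^1,\Gamma_c^1$ be 1-galaxies different from $\Gamma_0^1$. If $\Gamma_a^1$ is closer to $\Gamma_0^1$ than is $\Gamma_b^1$, and $\Gamma_b^1$ is closer to $\Gamma_0^1$ than is $\Gamma_c^1$, then $\Gamma_a^1$ is closer to $\Gamma_0^1$ than is $\Gamma_c^1$. Thus the 1-galaxies are partially ordered according to their closeness to $\Gamma_0^1$.
   Context: 1-graphs. A 1-graph $G^1=\{X^0,B,X^1\}$ consists of a graph $G^0=\{X^0,B\}$ (0-nodes, with branches as two-element sets) and 1-nodes. The 1-nodes are obtained by partitioning the 0-tips of $G^0$ (classes of eventually identical one-ended paths) into subsets, some augmented by a single 0-node (each 0-node used at most once). Wdistance. The wdistance $d(x,y)$ is the minimum ordinal length of a two-ended 0-walk or 1-walk terminating at $x$ and $y$. A finite 0-walk has length equal to its number of branch traversals; each 0-tip traversal contributes $\omega$; 1-walk lengths are natural sums. Thus $d<\omega^2$. $\oplus$ denotes the natural sum of ordinals. 1-wconnected: any two nodes are joined by such a walk. A 0-section is the subgraph of $G^0$ induced by a maximal set of pairwise path-connected branches. A boundary 1-node is a 1-node incident to at least two 0-sections. Enlargement. Fix a free ultrafilter $\mathcal F$ on $\mathbb N$. Hypernodes are classes $[x_n]$ of sequences of 0-nodes or of 1-nodes, modulo agreement on a set in $\mathcal F$. A standard hypernode is the class of a constant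 sequence. 1-galaxies. Hypernodes $[x_n],[y_n]$ are 1-limitedly distant if $\{n:d(x_n,y_n)\le\omega\cdot k\}\in\mathcal F$ for some $k\in\mathbb N$. 1-galaxies are the equivalence classes of this relation together with the hyperbranches between their 0-hypernodes. The principal 1-galaxy $\Gamma_0^1$ contains the standard hypernodes. Closeness. For 1-galaxies $\Gamma_a^1,\Gamma_b^1\ne\Gamma_0^1$, $\Gamma^1_a$ is closer to $\Gamma_0^1$ than is $\Gamma_b^1$ if there exist $[y_n]\in\Gamma_a^1$, $[z_n]\in\Gamma_b^1$ and $[x_n]\in\Gamma_0^1$ with $\{n: d(z_n,x_n)\ge d(y_n,x_n)\oplus\omega\cdot m\}\in\mathcal F$ for every $m\in\mathbb N$. *)

(* Defs.v *)
From Stdlib Require Import Arith List ClassicalEpsilon.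

Set Implicit Arguments.

(* (a, b) represents the ordinal omega*a + b. *)
Definition ord2 : Type := (nat * nat)%type.

Definition ole (o1 o2 : ord2) : Prop :=
  (fst o1 < fst o2)%nat \/ (fst o1 = fst o2 /\ (snd o1 <= snd o2)%nat).

(* natural (Hessenberg) sum *)
Definition oplus (o1 o2 : ord2) : ord2 := (fst o1 + fst o2, snd o1 + snd o2)%nat.

Definition omega_mul (k : nat) : ord2 := (k, 0%nat).

Section Paths.
Variable V : Type.
Variable adj : V -> V -> Prop.

Definition opath (p : nat -> V) : Prop :=
  (forall n, adj (p n) (p (S n))) /\ (forall m n, p m = p n -> m = n).

(* eventually identical one-ended paths (same 0-tip) *)
Definition tip_equiv (p q : nat -> V) : Prop :=
  exists i j, forall n, p (i + n) = q (j + n).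

Inductive fwalk : V -> V -> nat -> Prop :=
| fwalk0 u : fwalk u u 0
| fwalkS u w v n : adj u w -> fwalk w v n -> fwalk u v (S n).

Definition connected0 (u v : V) : Prop := exists n, fwalk u v n.
End Paths.

(* A 1-graph: 0-nodes, branches (two-element sets, i.e. a symmetric
   irreflexive relation), and 1-nodes. Each one-ended 0-path has its 0-tip
   in exactly one 1-node (tipnode, constant on 0-tips), every 1-node
   contains at least one 0-tip, and a 1-node may embrace one 0-node
   (embed), each 0-node being used at most once. *)
Record graph1 := Graph1 {
  node0 : Type;
  node1 : Type;
  branch : node0 -> node0 -> Prop;
  branch_sym : forall x y, branch x y -> branch y x;
  branch_irr : forall x, ~ branch x x;
  tipnode : (nat -> node0) -> node1;
  tipnode_tip : forall p q, opath branch p -> opath branch q ->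
                tip_equiv p q -> tipnode p = tipnode q;
  tipnode_surj : forall X, exists p, opath branch p /\ tipnode p = X;
  embed : node1 -> option node0;
  embed_inj : forall X Y v, embed X = Some v -> embed Y = Some v -> X = Y
}.

Section OneGraph.
Variable G : graph1.

Definition point : Type := (node0 G + node1 G)%type.

(* p and q denote the same place: equal, or a 1-node and the 0-node it embraces *)
Definition meets (p q : point) : Prop :=
  p = q \/
  exists X v, embed G X = Some v /\
    ((p = inl v /\ q = inr X) \/ (p = inr X /\ q = inl v)).

Definition owalk (u : node0 G) (X : node1 G) : Prop :=
  exists w : nat -> node0 G,
    w 0 = u /\ (forall n, branch G (w n) (w (S n))) /\
    exists i, opath (branch G) (fun n => w (i + n)) /\
              tipnode G (fun n => w (i + n)) = X.

Inductive section0 : point -> point -> ord2 -> Prop :=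
| sec_fin u v n : fwalk (branch G) u v n -> section0 (inl u) (inl v) (0, n)%nat
| sec_one u X : owalk u X -> section0 (inl u) (inr X) (1, 0)%nat
| sec_one_rev u X : owalk u X -> section0 (inr X) (inl u) (1, 0)%nat
| sec_endless u X Y : owalk u X -> owalk u Y -> section0 (inr X) (inr Y) (2, 0)%nat.

Inductive wwalk : point -> point -> ord2 -> Prop :=
| wwalk_nil p q : meets p q -> wwalk p q (0, 0)%nat
| wwalk_cons p p' q' q l o :
    meets p p' -> section0 p' q' l -> wwalk q' q o -> wwalk p q (oplus l o).

Definition wdist (p q : point) : ord2 :=
  epsilon (inhabits (0, 0)%nat)
    (fun o => wwalk p q o /\ forall o', wwalk p q o' -> ole o o').

Definition one_wconnected : Prop := forall p q : point, exists o, wwalk p q o.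

(* 0-sections: maximal sets of pairwise path-connected branches; the branch
   {u,v} is represented by its endpoint u. *)
Definition incident (X : node1 G) (u : node0 G) : Prop :=
  (exists p, opath (branch G) p /\ tipnode G p = X /\ connected0 (branch G) (p 0) u)
  \/ (exists w, embed G X = Some w /\ connected0 (branch G) w u).

Definition boundary1 (X : node1 G) : Prop :=
  exists u1 v1 u2 v2,
    branch G u1 v1 /\ branch G u2 v2 /\ incident X u1 /\ incident X u2 /\
    ~ connected0 (branch G) u1 u2.

Definition inf_many_boundary : Prop :=
  forall l : list (node1 G), exists X, boundary1 X /\ ~ In X l.

Definition free_ultrafilter (F : (nat -> Prop) -> Prop) : Prop :=
  F (fun _ => True) /\ ~ F (fun _ => False) /\
  (forall A B, F A -> F B -> F (fun n => A n /\ B n)) /\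
  (forall A B : nat -> Prop, F A -> (forall n, A n -> B n) -> F B) /\
  (forall A, F A \/ F (fun n => ~ A n)) /\
  (forall A, F A -> forall N, exists n, N <= n /\ A n).

(* representatives of hypernodes: sequences of 0-nodes or of 1-nodes *)
Definition hyperseq : Type := ((nat -> node0 G) + (nat -> node1 G))%type.

Definition hs (h : hyperseq) : nat -> point :=
  match h with inl f => fun n => inl (f n) | inr f => fun n => inr (f n) end.

Definition standard (h : hyperseq) : Prop :=
  (exists v, h = inl (fun _ => v)) \/ (exists X, h = inr (fun _ => X)).

Variable F : (nat -> Prop) -> Prop.

Definition lim1 (x y : hyperseq) : Prop :=
  exists k : nat, F (fun n => ole (wdist (hs x n) (hs y n)) (omega_mul k)).

Definition in_galaxy (x a : hyperseq) : Prop := lim1 x a.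

Definition in_principal (x : hyperseq) : Prop :=
  exists s, standard s /\ lim1 x s.

Definition closer (a b : hyperseq) : Prop :=
  exists y z x, in_galaxy y a /\ in_galaxy z b /\ in_principal x /\
    forall m : nat,
      F (fun n => ole (oplus (wdist (hs y n) (hs x n)) (omega_mul m))
                      (wdist (hs z n) (hs x n))).
End OneGraph.

(* Main.v *)
Require Import Defs.
From Stdlib Require Import Arith List ClassicalEpsilon.
From Stdlib Require Import Classical Lia.

Lemma nat_min (P : nat -> Prop) : (exists n, P n) -> exists n, P n /\ forall m, P m -> n <= m.
Proof.
  intros [n0 Hn0].
  destruct (classic (exists n, P n /\ forall m, P m -> n <= m)) as [H|H]; auto.
  exfalso.
  assert (forall n, ~ P n) as HN.
  { intro n. induction n as [n IH] using (well_founded_induction lt_wf).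
    intro Pn. apply H. exists n. split; auto. intros m Pm.
    destruct (le_lt_dec n m); auto. exfalso; exact (IH m l Pm). }
  exact (HN n0 Hn0).
Qed.

Section S.
Variable G : graph1.

Lemma meets_refl (p : point G) : meets p p.
Proof. left; reflexivity. Qed.

Lemma meets_sym (p q : point G) : meets p q -> meets q p.
Proof.
  intros [->|[X [v [He [[-> ->]|[-> ->]]]]]]; [left; auto| |];
  right; exists X, v; split; auto.
Qed.

Lemma meets_trans (p q r : point G) : meets p q -> meets q r -> meets p r.
Proof.
  intros H1 H2.
  destruct H1 as [E1|[X [v [He [[E1 E2]|[E1 E2]]]]]]; [subst; auto| |]; subst;
  destruct H2 as [E3|[Y [w [He2 [[E3 E4]|[E3 E4]]]]]]; subst; try discriminate.
  - right; exists X, v; auto.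
  - inversion E3; subst. rewrite He in He2. inversion He2; subst. left; auto.
  - right; exists X, v; auto.
  - inversion E3; subst. rewrite (embed_inj G X Y He He2). left; auto.
Qed.

Lemma fwalk_snoc (u v w : node0 G) n :
  fwalk (branch G) u v n -> branch G v w -> fwalk (branch G) u w (S n).
Proof.
  induction 1; intros.
  - econstructor; eauto. constructor.
  - econstructor; eauto.
Qed.

Lemma fwalk_rev (u v : node0 G) n : fwalk (branch G) u v n -> fwalk (branch G) v u n.
Proof.
  induction 1. constructor. eapply fwalk_snoc; eauto. apply branch_sym; auto.
Qed.

Lemma section_rev (p q : point G) l : section0 p q l -> section0 q p l.
Proof.
  destruct 1.
  - constructor. apply fwalk_rev; auto.
  - apply sec_one_rev; auto.
  - apply sec_one; auto.
  - eapply sec_endless; eauto.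
Qed.

Lemma oplus0 (o : ord2) : oplus (0,0) o = o.
Proof. destruct o; reflexivity. Qed.
Lemma oplus0r (o : ord2) : oplus o (0,0) = o.
Proof. destruct o; unfold oplus; simpl; f_equal; lia. Qed.
Lemma oplusA (a b c : ord2) : oplus a (oplus b c) = oplus (oplus a b) c.
Proof. destruct a, b, c; unfold oplus; simpl; f_equal; lia. Qed.
Lemma oplusC (a b : ord2) : oplus a b = oplus b a.
Proof. destruct a, b; unfold oplus; simpl; f_equal; lia. Qed.

Lemma wwalk_pre (p q r : point G) o : meets p q -> wwalk q r o -> wwalk p r o.
Proof.
  intros Hm Hw. destruct Hw.
  - constructor. eapply meets_trans; eauto.
  - eapply wwalk_cons; [eapply meets_trans; eauto|eauto|eauto].
Qed.

Lemma wwalk_cat (p q r : point G) o1 o2 :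
  wwalk p q o1 -> wwalk q r o2 -> wwalk p r (oplus o1 o2).
Proof.
  intros H1; revert o2 r; induction H1; intros o2 r H2.
  - rewrite oplus0. eapply wwalk_pre; eauto.
  - rewrite <- oplusA. econstructor; eauto.
Qed.

Lemma wwalk_rev (p q : point G) o : wwalk p q o -> wwalk q p o.
Proof.
  induction 1.
  - constructor. apply meets_sym; auto.
  - assert (wwalk q' p l).
    { rewrite <- (oplus0r l). econstructor. apply meets_refl.
      apply section_rev; eauto. constructor. apply meets_sym; auto. }
    rewrite oplusC. eapply wwalk_cat; eauto.
Qed.

Hypothesis HC : one_wconnected G.

Lemma wdist_spec (p q : point G) :
  wwalk p q (wdist p q) /\ forall o', wwalk p q o' -> ole (wdist p q) o'.
Proof.
  unfold wdist. apply epsilon_spec.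
  destruct (HC p q) as [o Ho].
  destruct (nat_min (fun a => exists b, wwalk p q (a, b))) as [a0 [[b1 Hb1] Ha0]].
  { exists (fst o), (snd o). destruct o; auto. }
  destruct (nat_min (fun b => wwalk p q (a0, b))) as [b0 [Hb0 Hmin]]; eauto.
  exists (a0, b0). split; auto. intros [a' b'] Hw. unfold ole; simpl.
  assert (a0 <= a') by (apply Ha0; eauto).
  destruct (Nat.eq_dec a0 a'); [subst; right; split; auto|left; lia].
Qed.

Lemma wdist_fst_le (p q : point G) o : wwalk p q o -> fst (wdist p q) <= fst o.
Proof. intro H. pose proof (proj2 (wdist_spec p q) o H). unfold ole in *; lia. Qed.

Lemma tri (p q r : point G) :
  fst (wdist p r) <= fst (wdist p q) + fst (wdist q r).
Proof.
  pose proof (wwalk_cat _ _ _ _ _ (proj1 (wdist_spec p q)) (proj1 (wdist_spec q r))) as H.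
  apply wdist_fst_le in H. destruct (wdist p q), (wdist q r); simpl in *; lia.
Qed.

Lemma symf (p q : point G) : fst (wdist p q) = fst (wdist q p).
Proof.
  pose proof (wdist_fst_le _ _ _ (wwalk_rev _ _ _ (proj1 (wdist_spec p q)))).
  pose proof (wdist_fst_le _ _ _ (wwalk_rev _ _ _ (proj1 (wdist_spec q p)))).
  lia.
Qed.

End S.

Lemma std_const (G : graph1) (s : hyperseq G) : standard s ->
  exists P, forall n, hs s n = P.
Proof.
  intros [[v ->]|[X ->]]; [exists (inl v)|exists (inr X)]; reflexivity.
Qed.

Theorem theorem11p3 (G : graph1) (F : (nat -> Prop) -> Prop) :
  free_ultrafilter F ->
  one_wconnected G ->
  inf_many_boundary G ->
  (exists h : hyperseq G, ~ in_principal F h) ->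
  forall a b c : hyperseq G,
    ~ in_principal F a -> ~ in_principal F b -> ~ in_principal F c ->
    closer F a b -> closer F b c -> closer F a c.
Proof.
  intros [_ [_ [Fand [Fup _]]]] HC _ _ a b c _ _ _
    [y [z [x [[k1 Hyz] [[k2 Hz] [[s [Hs [k3 Hx]]] HA]]]]]]
    [y' [z' [x' [[k4 Hy'] [[k5 Hz'] [[s' [Hs' [k6 Hx']]] HB]]]]]].
  destruct (std_const _ _ Hs) as [P HP]. destruct (std_const _ _ Hs') as [P' HP'].
  set (c0 := fst (wdist P' P)).
  exists y, z', x. split; [exists k1; auto|]. split; [exists k5; auto|].
  split; [exists s; split; auto; exists k3; auto|].
  intro m.
  set (M' := k2 + k4 + 2 * (k3 + k6 + c0)).
  pose proof (HA (S m)) as HA'. pose proof (HB M') as HB'.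
  pose proof (Fand _ _ HA' (Fand _ _ HB' (Fand _ _ Hz (Fand _ _ Hy' (Fand _ _ Hx Hx'))))) as HF.
  eapply Fup; [exact HF|]. clear HF. intros n [h1 [h2 [h3 [h4 [h5 h6]]]]].
  rewrite HP in h5. rewrite HP' in h6.
  set (Y := hs y n) in *. set (Z := hs z n) in *. set (X := hs x n) in *.
  set (Y' := hs y' n) in *. set (Z' := hs z' n) in *. set (X' := hs x' n) in *.
  set (B := hs b n) in *.
  unfold ole, oplus, omega_mul in *; simpl in *.
  assert (e1 : fst (wdist Z X) <= fst (wdist Z Y') + fst (wdist Y' X)) by (apply tri; auto).
  assert (e2 : fst (wdist Z Y') <= fst (wdist Z B) + fst (wdist B Y')) by (apply tri; auto).
  assert (e3 : fst (wdist B Y') = fst (wdist Y' B)) by (apply symf; auto).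
  assert (e4 : fst (wdist Y' X) <= fst (wdist Y' X') + fst (wdist X' X)) by (apply tri; auto).
  assert (e5 : fst (wdist X' X) <= fst (wdist X' P') + fst (wdist P' X)) by (apply tri; auto).
  assert (e6 : fst (wdist P' X) <= fst (wdist P' P) + fst (wdist P X)) by (apply tri; auto).
  assert (e7 : fst (wdist P X) = fst (wdist X P)) by (apply symf; auto).
  assert (e8 : fst (wdist Z' X') <= fst (wdist Z' X) + fst (wdist X X')) by (apply tri; auto).
  assert (e9 : fst (wdist X X') = fst (wdist X' X)) by (apply symf; auto).
  unfold c0 in *.
  left. lia.
Qed.
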